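(* For every $n\ge 1$ and every unit interval order $U\in\mathcal U_n$, we have $a(U)=\zeta(p(U))$.
   Context: Unit interval orders: let $\mathcal I=\{I_1,\dots,I_n\}$ be a set of $n$ closed intervals of length $1$ in $\mathbb R$, numbered from left to right. The poset $U(\mathcal I)$ on $\{1,\dots,n\}$ is defined by $i\prec j$ iff $I_i$ lies strictly to the left of $I_j$ (the right endpoint of $I_i$ is less than the left endpoint of $I_j$). A unit interval order is a relation on $\{1,\dots,n\}$ arising in this way; $\mathcal U_n$ denotes the set of unit interval orders on $\{1,\dots,n\}$. Dyck paths: a Dyck path of length $n$ is a lattice path from $(0,0)$ to $(n,n)$ with steps $(0,1)$ (up, letter $a$) and $(1,0)$ (right, letter $b$) never going below the line $y=x$; $\mathcal D_n$ is the set of them. For $1\le i<j\le n$ the box $(i,j)$ is the unit square $[i-1,i]\times[j-1,j]$. The area set of a Dyck path is the set of boxes lying between the path and the diagonal. The area sequence $(a_1,\dots,a_n)$ records, for each horizontal row from bottom to top, the number of boxes of the area set in that row; area sequences of Dyck paths are exactly the nonnegative integer sequences with $a_1=0$ and $a_i\le a_{i-1}+1$. The map $a$: for $U\in\mathcal U_n$ with order $\prec$, $a(U)$ is the Dyck path whose area set is $\{(i,j): 1\le i<j\le n,\ i\not\prec j\}$. Part listings: for a sequence $w=(w_1,\dots,w_n)$ of nonnegative integers, $P(w)$ is the poset on $\{1,\dots,n\}$ with $i\prec j$ iff either $w_j-w_i\ge 2$, or $w_j-w_i=1$ and $i<j$. It is a fact (established in the paper) that for every $U\in\mathcal U_n$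 there is a unique sequence $w$ which is the area sequence of a Dyck path and such that $P(w)$ is isomorphic (as a poset) to $U$; $p(U)$ denotes the Dyck path with this area sequence. The zeta map $\zeta:\mathcal D_n\to\mathcal D_n$: given $D$, label the top endpoint of each up step of $D$ by $a$ and the right endpoint of each right step by $b$. Read these labels first along the line $y=x$ from bottom-left to top-right, then along $y=x+1$ in the same direction, then along $y=x+2$, etc. Interpreting each $b$ read as an up step and each $a$ read as a right step yields the lattice path $\zeta(D)$ from $(0,0)$ to $(n,n)$ (which is a Dyck path). *)

(* Defs.v *)
From Stdlib Require Import Reals.
From mathcomp Require Import all_boot.
Set Implicit Arguments. Unset Strict Implicit. Unset Printing Implicit Defensive.

(* Elements 1..n of the paper are represented by 'I_n (element k+1 <-> k). *)

(* U is a unit interval order on {1..n}: there are n distinct closed unit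
   intervals I_i = [x_i, x_i + 1], numbered from left to right (x strictly
   increasing), with  i < j  iff  x_i + 1 < x_j (I_i strictly left of I_j). *)
Definition is_UIO (n : nat) (U : rel 'I_n) : Prop :=
  exists x : 'I_n -> R,
    (forall i j : 'I_n, (i < j)%N -> Rlt (x i) (x j)) /\
    (forall i j : 'I_n, U i j <-> Rlt (Rplus (x i) R1) (x j)).

(* A lattice path is a seq bool: true = up step (0,1) (letter a),
   false = right step (1,0) (letter b). *)
Definition ups (s : seq bool) : nat := count id s.
Definition rights (s : seq bool) : nat := count negb s.

Definition dyck (n : nat) (D : seq bool) : bool :=
  [&& size D == (n + n)%N, ups D == n &
      all (fun k => rights (take k D) <= ups (take k D)) (iota 0 (size D).+1)].

(* Box (i,j) (1-based, the unit square [i-1,i]x[j-1,j]) lies between the path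
   and the diagonal: i < j and the path reaches height j while its
   x-coordinate is still <= i-1. *)
Definition in_area (D : seq bool) (i j : nat) : bool :=
  (0 < i) && (i < j) &&
  has (fun k => (j <= ups (take k D)) && (rights (take k D) <= i.-1))
      (iota 0 (size D).+1).

Definition area_seq (n : nat) (D : seq bool) : seq nat :=
  mkseq (fun j => count (fun i => in_area D i j.+1) (iota 1 n)) n.

Definition Pw (n : nat) (w : seq nat) : rel 'I_n :=
  fun i j => ((nth 0 w i).+2 <= nth 0 w j) ||
             ((nth 0 w j == (nth 0 w i).+1) && (i < j)%N).

Definition poset_iso (n : nat) (P Q : rel 'I_n) : Prop :=
  exists f : 'I_n -> 'I_n, bijective f /\ forall i j, P i j = Q (f i) (f j).

Definition is_p (n : nat) (U : rel 'I_n) (D : seq bool) : Prop :=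
  dyck n D /\ poset_iso (@Pw n (area_seq n D)) U.

Definition is_a (n : nat) (U : rel 'I_n) (D : seq bool) : Prop :=
  dyck n D /\
  forall i j : nat, in_area D i j <->
    exists (i' j' : 'I_n), [/\ i = i'.+1, j = j'.+1, (i' < j')%N & ~~ U i' j'].

(* Labelled endpoints of the steps: (x, y, label) with label true = a (up step),
   false = b (right step). *)
Definition step_points (D : seq bool) : seq (nat * nat * bool) :=
  mkseq (fun k => let t := take k.+1 D in (rights t, ups t, nth false D k))
        (size D).

Definition read_le (u v : nat * nat * bool) : bool :=
  let: (xu, yu, _) := u in let: (xv, yv, _) := v in
  ((yu - xu) < (yv - xv)) || ((yu - xu == yv - xv) && (xu <= xv)).

(* b read -> up step (true); a read -> right step (false). *)
Definition zeta (D : seq bool) : seq bool :=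
  map (fun u : nat * nat * bool => ~~ u.2) (sort read_le (step_points D)).

(* Main.v *)
Require Import Defs.
From Stdlib Require Import Reals.
From mathcomp Require Import all_boot.
From mathcomp Require Import zify.
From Stdlib Require Import Lra.
Set Implicit Arguments. Unset Strict Implicit. Unset Printing Implicit Defensive.

Fixpoint upx (s : seq bool) : seq nat :=
  match s with
  | [::] => [::]
  | true :: s' => 0 :: upx s'
  | false :: s' => map S (upx s')
  end.

Lemma ups_cons b s : ups (b :: s) = b + ups s. Proof. by []. Qed.
Lemma rights_cons b s : rights (b :: s) = ~~ b + rights s. Proof. by []. Qed.

Lemma ups_t s : ups (true :: s) = (ups s).+1. Proof. by []. Qed.
Lemma ups_f s : ups (false :: s) = ups s. Proof. by []. Qed.
Lemma rights_t s : rights (true :: s) = rights s. Proof. by []. Qed.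
Lemma rights_f s : rights (false :: s) = (rights s).+1. Proof. by []. Qed.

Lemma take_S (x : bool) s k : take k.+1 (x :: s) = x :: take k s. Proof. by []. Qed.

Lemma size_upx s : size (upx s) = ups s.
Proof. by elim: s => [|[] s IH] //=; rewrite ?size_map IH. Qed.

Lemma upx_cat s1 s2 : upx (s1 ++ s2) = upx s1 ++ map (addn (rights s1)) (upx s2).
Proof.
elim: s1 => [|[] s1 IH] /=; first by rewrite map_id_in.
  by rewrite IH.
rewrite IH map_cat -map_comp; congr (_ ++ _); apply: eq_map => x /=; by rewrite addSn.
Qed.

Lemma upx_rcons_t s : upx (rcons s true) = rcons (upx s) (rights s).
Proof. by rewrite -cats1 upx_cat /= addn0 cats1. Qed.
Lemma upx_rcons_f s : upx (rcons s false) = upx s.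
Proof. by rewrite -cats1 upx_cat /= cats0. Qed.

Lemma upx_sorted s : sorted leq (upx s).
Proof.
elim: s => [|[] s IH] //=.
  by rewrite path_min_sorted //; apply/allP => x.
by rewrite sorted_map.
Qed.

Lemma upx_inj s1 s2 : rights s1 = rights s2 -> upx s1 = upx s2 -> s1 = s2.
Proof.
elim: s1 s2 => [|b1 s1 IH] [|b2 s2] //=.
- by case: b2 => //= _; case: (upx s2).
- by case: b1 => //= _; case: (upx s1).
case: b1; case: b2 => //= Hr.
- by case=> /(IH _ Hr) ->.
- by case: (upx s2).
- by case: (upx s1).
- by case: Hr => /IH H /(inj_map succn_inj) /H ->.
Qed.

Lemma has_iotaS (p : pred nat) m :
  has p (iota 0 m.+1) = p 0 || has (fun k => p k.+1) (iota 0 m).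
Proof. by rewrite /= -(addn0 1) iotaDl has_map. Qed.


Lemma has_take_KL (b : bool) s r c :
  has (fun k => (r < ups (take k (b::s))) && (rights (take k (b::s)) <= c)) (iota 0 (size (b::s)).+1)
  = has (fun k => (r < b + ups (take k s)) && (~~b + rights (take k s) <= c)) (iota 0 (size s).+1).
Proof. rewrite has_iotaS take0; have -> : ups [::] = 0 by []. by rewrite ltn0. Qed.

Lemma KL s r c :
  has (fun k => (r < ups (take k s)) && (rights (take k s) <= c)) (iota 0 (size s).+1)
  = (r < ups s) && (nth 0 (upx s) r <= c).
Proof.
elim: s r c => [|b s IH] r c.
  by [].
rewrite has_take_KL.
case: b.
  case: r => [|r].
    apply/hasP; exists 0; first by rewrite mem_iota.
    by rewrite take0 /= ?leq0n.
  rewrite [upx _]/= [nth _ _ _]/= ups_cons add1n ltnS -IH.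
  by apply: eq_has => k /=; rewrite add1n ltnS add0n.
case: c => [|c].
  apply/idP/idP => [/hasP[k _ /andP[_]] //|/andP[Hr]].
  by rewrite (nth_map 0) // size_upx.
rewrite [upx _]/=; have -> : ups (false :: s) = ups s by []. case: (ltnP r (ups s)) => Hr.
  rewrite (nth_map 0) ?size_upx // ltnS.
  have := IH r c; rewrite Hr andTb => <-.
  by apply: eq_has => k /=; rewrite ?add1n ?add0n ?ltnS.
have := IH r c; rewrite (leq_gtF Hr) andFb => H.
rewrite andFb; apply: etrans H.
by apply: eq_has => k /=; rewrite ?add1n ?add0n ?ltnS.
Qed.

Lemma PL1 s r : r < ups s ->
  exists k, ups (take k s) = r /\ rights (take k s) = nth 0 (upx s) r.
Proof.
elim: s r => [|[] s IH] r //.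
- case: r => [|r] Hr; first by exists 0; rewrite take0.
  move: Hr; rewrite ups_t ltnS => /IH [k [H1 H2]]; exists k.+1.
  by rewrite take_S ups_t rights_t H1 H2.
- rewrite ups_f => Hr; have [k [H1 H2]] := IH r Hr; exists k.+1.
  by rewrite take_S ups_f rights_f H1 H2 (nth_map 0) // size_upx.
Qed.

Lemma PL2 s k : ups (take k s) < ups s ->
  rights (take k s) <= nth 0 (upx s) (ups (take k s)).
Proof.
elim: s k => [|b s IH] [|k] //.
case: b.
- rewrite take_S !ups_t ltnS rights_t => /IH //.
- rewrite take_S !ups_f rights_f => H.
  rewrite (nth_map 0) ?size_upx // ltnS.
  exact: IH.
Qed.

Lemma count_take_le (p : pred bool) k s : count p (take k s) <= count p s.
Proof. by rewrite -{2}(cat_take_drop k s) count_cat leq_addr. Qed.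

Lemma size_ups_rights s : size s = ups s + rights s.
Proof. by rewrite /ups /rights -(count_predC id) . Qed.

Definition pc (s : seq bool) := forall k, rights (take k s) <= ups (take k s).

Lemma dyckP n D : dyck n D <-> [/\ size D = n + n, ups D = n & pc D].
Proof.
rewrite /dyck; split.
- case/and3P => /eqP H1 /eqP H2 /allP H3; split => // k.
  case: (leqP k (size D)) => Hk.
    by apply: H3; rewrite mem_iota.
  rewrite take_oversize; last exact: ltnW.
  by have := H3 (size D); rewrite mem_iota leqnn take_size; apply.
- case=> H1 H2 H3; apply/and3P; split; try by apply/eqP.
  by apply/allP => k _; apply: H3.
Qed.

Lemma pc_upx s : pc s -> forall r, r < ups s -> nth 0 (upx s) r <= r.
Proof.
move=> H r /PL1 [k [H1 H2]]; rewrite -H2; apply: (leq_trans (H k)); by rewrite H1.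
Qed.

Lemma upx_pc s : rights s <= ups s -> (forall r, r < ups s -> nth 0 (upx s) r <= r) -> pc s.
Proof.
move=> Hs Hx k.
case: (ltnP (ups (take k s)) (ups s)) => Hk.
  exact: (leq_trans (PL2 Hk) (Hx _ Hk)).
apply: (leq_trans (count_take_le _ _ _)); apply: (leq_trans Hs Hk).
Qed.

Lemma in_areaE s i j : in_area s i j =
  [&& 0 < i, i < j, j.-1 < ups s & nth 0 (upx s) j.-1 <= i.-1].
Proof.
rewrite /in_area; case: j => [|j]; first by rewrite ltn0 andbF.
by rewrite KL !andbA.
Qed.

Lemma count_iota_all (p : pred nat) m k :
  (forall i, m <= i < m + k -> p i) -> count p (iota m k) = k.
Proof.
move=> H; rewrite -[RHS](size_iota m k) -count_predT.
by apply: eq_in_count => i; rewrite mem_iota => /H ->.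
Qed.

Lemma count_iota_none (p : pred nat) m k :
  (forall i, m <= i < m + k -> ~~ p i) -> count p (iota m k) = 0.
Proof.
move=> H; rewrite -(count_pred0 (iota m k)).
by apply: eq_in_count => i; rewrite mem_iota => /H /negbTE ->.
Qed.

Lemma count_interval a b n : a <= b -> b <= n ->
  count (fun i => (a < i) && (i <= b)) (iota 1 n) = b - a.
Proof.
move=> Hab Hbn.
have -> : n = a + ((b - a) + (n - b)) by lia.
rewrite !iotaD !count_cat count_iota_none; last by move=> i Hi; apply/negP => /andP[]; lia.
rewrite count_iota_all; last by move=> i Hi; apply/andP; lia.
rewrite count_iota_none; last by move=> i Hi; apply/negP => /andP[]; lia.
by rewrite add0n addn0.
Qed.

Definition W (P : seq bool) := mkseq (fun r => r - nth 0 (upx P) r) (ups P).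

Lemma size_W P : size (W P) = ups P. Proof. by rewrite size_mkseq. Qed.

Lemma nth_W P r : r < ups P -> nth 0 (W P) r = r - nth 0 (upx P) r.
Proof. by move=> H; rewrite nth_mkseq. Qed.

Lemma area_seqE n D : dyck n D -> area_seq n D = W D.
Proof.
case/dyckP => H1 H2 H3; rewrite /area_seq /W H2 /mkseq.
apply/eq_in_map => j; rewrite mem_iota add0n => /andP[_ Hj].
have Hx : nth 0 (upx D) j <= j by apply: pc_upx => //; rewrite H2.
rewrite -(count_interval Hx (ltnW Hj)).
apply: eq_in_count => i; rewrite mem_iota => /andP[Hi1 Hi2].
rewrite in_areaE /= H2 Hj /= ltnS.
case: i Hi1 Hi2 => [|i] //= _ _.
by rewrite ltnS andbC.
Qed.


Definition Sb (d : nat) (w : seq nat) : seq bool :=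
  [seq x == d | x <- w & (x == d) || (x.+1 == d)].
Definition hh (P : seq bool) := ups P - rights P.
Definition lev (P : seq bool) k := hh (take k.+1 P).
Definition word (P : seq bool) d :=
  [seq ~~ nth false P k | k <- iota 0 (size P) & lev P k == d].

Lemma S_rcons d w v : Sb d (rcons w v) =
  Sb d w ++ (if (v == d) || (v.+1 == d) then [:: v == d] else [::]).
Proof. rewrite /Sb filter_rcons; case: ifP => _; by rewrite ?map_rcons -?cats1 ?cats0. Qed.

Lemma S_cat d w1 w2 : Sb d (w1 ++ w2) = Sb d w1 ++ Sb d w2.
Proof. by rewrite /Sb filter_cat map_cat. Qed.

Lemma ups_rcons P b : ups (rcons P b) = ups P + b.
Proof. by rewrite /ups -cats1 count_cat /= addn0. Qed.
Lemma rights_rcons P b : rights (rcons P b) = rights P + ~~ b.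
Proof. by rewrite /rights -cats1 count_cat /= addn0. Qed.

Lemma take_rcons_le (P : seq bool) (b : bool) k : k <= size P -> take k (rcons P b) = take k P.
Proof. by move=> H; rewrite -cats1 takel_cat. Qed.

Lemma pc_rcons P (b : bool) : pc (rcons P b) -> pc P.
Proof.
move=> H k; case: (leqP k (size P)) => Hk.
  by rewrite -(take_rcons_le b Hk).
rewrite take_oversize ?(ltnW Hk) //.
by have := H (size P); rewrite take_rcons_le // take_size.
Qed.

Lemma pc_full P : pc P -> rights P <= ups P.
Proof. by move=> H; have := H (size P); rewrite take_size. Qed.

Lemma W_rcons_t P : W (rcons P true) = rcons (W P) (hh P).
Proof.
rewrite /W ups_rcons addn1 mkseqS upx_rcons_t nth_rcons size_upx ltnn eqxx.
congr rcons; apply/eq_in_map => r; rewrite mem_iota add0n => /andP[_ Hr].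
by rewrite nth_rcons size_upx Hr.
Qed.

Lemma W_rcons_f P : W (rcons P false) = W P.
Proof. by rewrite /W ups_rcons addn0 upx_rcons_f. Qed.

Lemma word_rcons P b d : word (rcons P b) d =
  word P d ++ (if hh (rcons P b) == d then [:: ~~ b] else [::]).
Proof.
rewrite /word size_rcons -addn1 iotaD add0n filter_cat map_cat /=.
congr (_ ++ _).
  have E1 : {in iota 0 (size P), forall k, lev (rcons P b) k = lev P k}.
    move=> k; rewrite mem_iota add0n => /andP[_ Hk].
    by rewrite /lev take_rcons_le.
  rewrite (eq_in_filter (a2 := fun k => lev P k == d)); last by move=> k /E1 ->.
  apply/eq_in_map => k; rewrite mem_filter mem_iota add0n => /andP[_ /andP[_ Hk]].
  by rewrite nth_rcons Hk.
rewrite /lev take_oversize ?size_rcons //.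
by case: ifP => _ //=; rewrite nth_rcons ltnn eqxx.
Qed.

Lemma caseT (h d : nat) :
  (if d < h then [:: true] else [::]) ++
  (if (h == d) || (h.+1 == d) then [:: h == d] else [::]) =
  (if h.+1 == d then [:: ~~ true] else [::]) ++ (if d < h.+1 then [:: true] else [::]).
Proof.
case: (ltngtP d h) => H.
- have E1: (h == d) = false by apply/eqP; lia.
  have E2: (h.+1 == d) = false by apply/eqP; lia.
  have E3: d < h.+1 by lia.
  by rewrite ?E1 ?E2 ?E3.
- have E1: (h == d) = false by apply/eqP; lia.
  have E4: d < h = false by apply/negbTE; lia.
  rewrite ?E1 ?E4.
  case: (ltngtP d h.+1) => H2.
  + lia.
  + have E2: (h.+1 == d) = false by apply/eqP; lia. by rewrite ?E2.
  + by rewrite ?H2 ?eqxx ?ltnn.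
- have E1: (h.+1 == h) = false by apply/eqP; lia.
  by rewrite ?H ?eqxx ?ltnn ?ltnSn ?E1.
Qed.

Lemma caseF (h d : nat) : 0 < h ->
  (if d < h then [:: true] else [::]) =
  (if h.-1 == d then [:: ~~ false] else [::]) ++ (if d < h.-1 then [:: true] else [::]).
Proof.
move=> Hh; case: (ltngtP d h.-1) => H.
- have E1: (h.-1 == d) = false by apply/eqP; lia.
  have E2: d < h by lia.
  by rewrite ?E1 ?E2.
- have E1: (h.-1 == d) = false by apply/eqP; lia.
  have E2: d < h = false by apply/negbTE; lia.
  by rewrite ?E1 ?E2.
- have E1: h.-1 < h by lia.
  by rewrite ?H ?eqxx ?ltnn ?E1.
Qed.

Lemma L3 P : pc P -> forall d,
  Sb d (W P) = word P d ++ (if d < hh P then [:: true] else [::]).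
Proof.
elim/last_ind: P => [|P b IH] Hpc d.
  by rewrite /W /word /Sb /hh /=.
have HP := pc_rcons Hpc.
have Hf := pc_full Hpc.
rewrite word_rcons -catA.
case: b Hf Hpc => Hf Hpc.
- rewrite W_rcons_t S_rcons IH // -catA.
  have -> : hh (rcons P true) = (hh P).+1.
    rewrite /hh ups_rcons rights_rcons /= addn0 addn1 subSn //.
    exact: pc_full.
  by rewrite caseT.
- rewrite W_rcons_f IH //.
  have Hh : 0 < hh P.
    move: Hf; rewrite /hh ups_rcons rights_rcons /= addn0 addn1; lia.
  have -> : hh (rcons P false) = (hh P).-1.
    by rewrite /hh ups_rcons rights_rcons /= addn0 addn1 subnS.
  by rewrite -caseF.
Qed.


Definition lexlt (g : nat -> nat) : rel nat :=
  fun a b => (g a < g b) || ((g a == g b) && (a < b)).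
Definition lexle (g : nat -> nat) : rel nat :=
  fun a b => (g a < g b) || ((g a == g b) && (a <= b)).
Definition blocks (g : nat -> nat) (s : seq nat) m :=
  flatten [seq [seq k <- s | g k == d] | d <- iota 0 m].

Lemma lexlt_trans g : transitive (lexlt g).
Proof. move=> y x z; rewrite /lexlt; lia. Qed.
Lemma lexle_trans g : transitive (lexle g).
Proof. move=> y x z; rewrite /lexle; lia. Qed.
Lemma lexle_anti g : antisymmetric (lexle g).
Proof. move=> x y; rewrite /lexle => H; apply/eqP; lia. Qed.

Lemma blocksS g s m : blocks g s m.+1 = blocks g s m ++ [seq k <- s | g k == m].
Proof. by rewrite /blocks -addn1 iotaD map_cat flatten_cat /= cats0. Qed.

Lemma mem_blocks g s m k : (k \in blocks g s m) = (k \in s) && (g k < m).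
Proof.
elim: m => [|m IH]; first by rewrite /blocks /= ltn0 andbF.
rewrite blocksS mem_cat IH mem_filter.
case: (k \in s); rewrite /= ?andbF ?andbT //; lia.
Qed.

Lemma blocks_sorted g s m : sorted ltn s -> sorted (lexlt g) (blocks g s m).
Proof.
move=> Hs; elim: m => [|m IH] //.
rewrite blocksS sorted_pairwise; last exact: lexlt_trans.
rewrite pairwise_cat; apply/and3P; split.
- apply/allrelP => a b; rewrite mem_blocks mem_filter => /andP[_ Ha] /andP[/eqP Hb _].
  by rewrite /lexlt Hb Ha.
- by rewrite -sorted_pairwise //; exact: lexlt_trans.
rewrite -sorted_pairwise; last exact: lexlt_trans.
apply: (sub_in_sorted (P := fun k => g k == m) (e := ltn)).
- move=> a b /eqP Ha /eqP Hb H; rewrite /lexlt Ha Hb eqxx ltnn; exact: H.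
- by apply/allP => k; rewrite mem_filter => /andP[].
- exact: sorted_filter ltn_trans _ _ Hs.
Qed.

Lemma count_split2 (a b c : pred nat) (s : seq nat) :
  (forall x, c x = a x || b x) -> (forall x, ~~ (a x && b x)) ->
  count c s = count a s + count b s.
Proof.
move=> H1 H2; elim: s => //= x s ->; rewrite H1.
have := H2 x; case: (a x); case: (b x) => //= _; lia.
Qed.

Lemma count_blocks g s m (p : pred nat) :
  count p (blocks g s m) = count (fun k => p k && (g k < m)) s.
Proof.
elim: m => [|m IH].
  by rewrite /blocks /=; symmetry; apply/eqP; rewrite -leqn0 leqNgt -has_count;
     apply/hasPn => k _; rewrite ltn0 andbF.
rewrite blocksS count_cat IH count_filter.
symmetry; apply: count_split2 => k /=; case: (p k) => /=; lia.
Qed.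

Lemma blocks_perm g s m : all (fun k => g k < m) s -> perm_eq (blocks g s m) s.
Proof.
move=> /allP H; apply/permP => p; rewrite count_blocks.
by apply: eq_in_count => k /H ->; rewrite andbT.
Qed.

Lemma lev_le P k : lev P k <= size P.
Proof.
rewrite /lev /hh; apply: (leq_trans (leq_subr _ _)).
apply: (leq_trans (count_take_le _ _ _)); by rewrite size_ups_rights leq_addr.
Qed.


Lemma L4 D m : pc D -> size D < m ->
  zeta D = flatten [seq word D d | d <- iota 0 m].
Proof.
move=> Hpc Hm.
rewrite /zeta /step_points /mkseq sort_map -map_comp.
set F := relpre _ read_le.
have -> : sort F (iota 0 (size D)) = blocks (lev D) (iota 0 (size D)) m.
  apply: (sorted_eq (@lexle_trans (lev D)) (@lexle_anti (lev D))).
  - have Hs : sorted F (sort F (iota 0 (size D))).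
      apply: sort_sorted => a b; rewrite /F /read_le /=; lia.
    rewrite -(eq_in_sorted (P := fun k => k < size D) (e := F)) //.
      move=> a b Ha0 Hb0; have Ha : a < size D := Ha0; have Hb : b < size D := Hb0.
      rewrite /F /read_le /lexle /lev /hh /=.
      have Ha1 := Hpc a.+1; have Hb1 := Hpc b.+1.
      have Ha2 : size (take a.+1 D) = a.+1 by rewrite size_takel.
      have Hb2 : size (take b.+1 D) = b.+1 by rewrite size_takel.
      rewrite size_ups_rights in Ha2; rewrite size_ups_rights in Hb2.
      lia.
    by apply/allP => k; rewrite mem_sort mem_iota add0n.
  - apply: (sub_sorted (e := lexlt (lev D))).
      by move=> a b; rewrite /lexlt /lexle; lia.
    by apply: blocks_sorted; exact: iota_ltn_sorted.
  - rewrite perm_sort perm_sym; apply: blocks_perm.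
    apply/allP => k _; exact: leq_ltn_trans (lev_le _ _) Hm.
rewrite /blocks map_flatten -map_comp.
by [].
Qed.


Definition Zw m w := flatten [seq Sb d w | d <- iota 0 m].

Lemma zetaE n D : dyck n D -> zeta D = Zw (size D).+1 (W D).
Proof.
move=> HD; have [H1 H2 H3] := (dyckP n D).1 HD.
rewrite (L4 H3 (ltnSn _)) /Zw; congr flatten; apply/eq_in_map => d _.
rewrite L3 //.
have -> : hh D = 0 by rewrite /hh H2; have := size_ups_rights D; lia.
by rewrite ltn0 cats0.
Qed.

Definition Pn (w : seq nat) (r' r : nat) : bool :=
  ((nth 0 w r').+2 <= nth 0 w r) || ((nth 0 w r == (nth 0 w r').+1) && (r' < r)).
Definition dP w r := count (fun r' => Pn w r' r) (iota 0 (size w)).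

Lemma take_rcons_le' (T : Type) (P : seq T) (b : T) k : k <= size P -> take k (rcons P b) = take k P.
Proof. by move=> H; rewrite -cats1 takel_cat. Qed.

Lemma iota_rcons (T : Type) (w : seq T) v :
  iota 0 (size (rcons w v)) = rcons (iota 0 (size w)) (size w).
Proof. by rewrite size_rcons -addn1 iotaD add0n cats1. Qed.

Lemma rights_Sb d w : rights (Sb d w) = count (fun x => x.+1 == d) w.
Proof.
rewrite /rights /Sb count_map count_filter; apply: eq_count => x /=; lia.
Qed.

Lemma upx_Sb d w : upx (Sb d w) =
  [seq count (fun x => x.+1 == d) (take r w) | r <- iota 0 (size w) & nth 0 w r == d].
Proof.
elim/last_ind: w => [|w v IH] //.
rewrite S_rcons upx_cat IH iota_rcons filter_rcons nth_rcons ltnn eqxx.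
have E1 : [seq count (fun x => x.+1 == d) (take r (rcons w v)) |
            r <- iota 0 (size w) & nth 0 (rcons w v) r == d] =
          [seq count (fun x => x.+1 == d) (take r w) | r <- iota 0 (size w) & nth 0 w r == d].
  rewrite (@eq_in_filter _ _ (fun r => nth 0 w r == d)); last first.
    by move=> r; rewrite mem_iota add0n => /andP[_ Hr]; rewrite nth_rcons Hr.
  apply/eq_in_map => r; rewrite mem_filter mem_iota add0n => /andP[_ /andP[_ Hr]].
  by rewrite take_rcons_le' // ltnW.
case: (v =P d) => Hv.
- rewrite /= map_rcons -cats1 E1 take_rcons_le' // take_size.
  by rewrite addn0 rights_Sb.
- case: (v.+1 == d); by rewrite /= ?cats0 E1.
Qed.

Lemma dP_eq w r : r < size w -> dP w r =
  count (fun x => x.+2 <= nth 0 w r) w + count (fun x => x.+1 == nth 0 w r) (take r w).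
Proof.
move=> Hr; rewrite /dP (@count_split2 (fun r' => (nth 0 w r').+2 <= nth 0 w r)
   (fun r' => (nth 0 w r == (nth 0 w r').+1) && (r' < r))); first last.
- move=> x; lia.
- by [].
congr addn.
  transitivity (count (fun x => x.+2 <= nth 0 w r) (mkseq (nth 0 w) (size w))).
    by rewrite /mkseq count_map.
  by rewrite mkseq_nth.
transitivity (count (fun x => x.+1 == nth 0 w r) (take r (mkseq (nth 0 w) (size w))));
  last by rewrite mkseq_nth.
rewrite /mkseq -map_take take_iota count_map.
have -> : minn r (size w) = r by lia.
have -> : size w = r + (size w - r) by lia.
rewrite iotaD count_cat add0n (count_iota_none (m := r)); last by move=> i Hi; lia.
rewrite addn0; apply: eq_in_count => i; rewrite mem_iota add0n => /andP[_ Hi] /=.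
by rewrite Hi andbT eq_sym.
Qed.

Lemma block_upx d w :
  map (addn (count (fun x => x.+2 <= d) w)) (upx (Sb d w)) =
  map (dP w) [seq r <- iota 0 (size w) | nth 0 w r == d].
Proof.
rewrite upx_Sb -!map_comp; apply/eq_in_map => r.
rewrite mem_filter mem_iota add0n => /andP[/eqP Hd /andP[_ Hr]] /=.
by rewrite dP_eq // Hd.
Qed.

Lemma count_le_S (d : nat) (w : seq nat) :
  count (fun x => x.+2 <= d.+1) w = count (fun x => x.+2 <= d) w + count (fun x => x.+1 == d) w.
Proof. apply: count_split2 => x; lia. Qed.

Lemma upx_Zfrom w k : forall d,
  map (addn (count (fun x => x.+2 <= d) w)) (upx (flatten [seq Sb d' w | d' <- iota d k])) =
  map (dP w) (flatten [seq [seq r <- iota 0 (size w) | nth 0 w r == d'] | d' <- iota d k]).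
Proof.
elim: k => [|k IH] d //=.
rewrite upx_cat !map_cat block_upx; congr (_ ++ _).
rewrite -map_comp -IH; apply: eq_map => x /=.
by rewrite rights_Sb count_le_S addnA.
Qed.

Lemma upx_Zw m w : upx (Zw m w) = map (dP w) (blocks (nth 0 w) (iota 0 (size w)) m).
Proof.
have := upx_Zfrom w m 0.
have -> : count (fun x => x.+2 <= 0) w = 0 by apply/eqP; rewrite -leqn0 leqNgt -has_count; apply/hasPn.
by rewrite map_id_in // => ->.
Qed.


Section Rank.
Variable lt : rel nat.
Hypothesis lt_trans : transitive lt.
Hypothesis lt_irr : irreflexive lt.
Hypothesis lt_total : forall a b, a != b -> lt a b || lt b a.

Lemma IL L s : sorted lt L -> s \in L -> index s L = count (lt^~ s) L.
Proof.
elim: L => [|a L IH] //= Hs; rewrite inE.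
have HL : sorted lt L := path_sorted Hs.
have Ha : all (lt a) L by move: Hs; rewrite (path_sortedE lt_trans) => /andP[].
case: (a =P s) => [<- _|Has /= Hin0].
  rewrite lt_irr add0n; symmetry; apply/eqP; rewrite -leqn0 leqNgt -has_count.
  apply/hasPn => x Hx; apply/negP => Hxa.
  by have := lt_trans Hxa ((allP Ha) x Hx); rewrite lt_irr.
have Hin : s \in L by move: Hin0; case: (s =P a) => // E; rewrite E in Has.
have Has' : lt a s := (allP Ha) s Hin.
by rewrite Has' add1n IH.
Qed.

Lemma RL L r (Q : pred nat) : (forall a b, lt a b -> Q b -> Q a) -> r \in L ->
  (count (lt^~ r) L < count Q L) = Q r.
Proof.
move=> HQ Hr; case: (boolP (Q r)) => Hq.
  have H1 : count (lt^~ r) L = count (fun x => Q x && lt x r) L.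
    by apply: eq_count => x /=; case: (boolP (lt x r)) => H; rewrite ?andbF ?andbT // (HQ _ _ H Hq).
  have := count_predC (fun x => lt x r) (filter Q L).
  rewrite !count_filter size_filter => H2.
  have H3 : 0 < count (predI (predC (fun x => lt x r)) Q) L.
    rewrite -has_count; apply/hasP; exists r => //=; by rewrite lt_irr Hq.
  rewrite H1; apply: leq_trans _ (eq_leq H2).
  have -> : count (predI (fun x => lt x r) Q) L = count (fun x => Q x && lt x r) L.
    by apply: eq_count => x /=; rewrite andbC.
  by rewrite -addn1 leq_add2l.
apply/negbTE; rewrite -leqNgt; apply: sub_count => x /= Hx.
case: (x =P r) => [Exr|/eqP Hne]; first by move: Hq; rewrite -Exr Hx.
case/orP: (lt_total Hne) => // H.
by rewrite (HQ _ _ H Hx) in Hq.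
Qed.

End Rank.

Lemma lexlt_irr g : irreflexive (lexlt g).
Proof. by move=> x; rewrite /lexlt ltnn eqxx ltnn. Qed.
Lemma lexlt_total g a b : a != b -> lexlt g a b || lexlt g b a.
Proof. rewrite /lexlt => /eqP H; lia. Qed.

Lemma Pn_down w s a b : lexlt (nth 0 w) a b -> Pn w b s -> Pn w a s.
Proof. rewrite /lexlt /Pn; lia. Qed.
Lemma Pn_lt w s a : Pn w a s -> lexlt (nth 0 w) a s.
Proof. rewrite /lexlt /Pn; lia. Qed.

Definition stepr : rel nat := fun a b => b <= a.+1.

Lemma W_props n D : dyck n D ->
  [/\ size (W D) = n, sorted stepr (W D), nth 0 (W D) 0 = 0 &
      forall r, r < n -> nth 0 (W D) r <= r].
Proof.
case/dyckP => H1 H2 H3.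
have Hx := pc_upx H3.
split.
- by rewrite size_W.
- apply/(sortedP 0) => i; rewrite size_W => Hi.
  have Hi' : i < ups D by lia.
  rewrite /stepr !nth_W //.
  have := Hx i (ltnW Hi); have := Hx i.+1 Hi.
  have /(sortedP 0) Hs := upx_sorted D.
  have := Hs i; rewrite size_upx => /(_ Hi); rewrite /=; lia.
- case E: (ups D) => [|n'].
    by rewrite nth_default // size_W E.
  by rewrite nth_W ?E.
- move=> r Hr; rewrite nth_W ?H2 //; lia.
Qed.


Section DyckFacts.
Variables (n : nat) (D : seq bool).
Hypothesis HD : dyck n D.

Let w := W D.
Let m := (size D).+1.
Definition Lr := blocks (nth 0 (W D)) (iota 0 n) (size D).+1.

Lemma w_size : size w = n.
Proof. by case: (W_props HD). Qed.

Lemma w_le r : r < n -> nth 0 w r <= r.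
Proof. by move=> Hr; case: (W_props HD) => _ _ _ /(_ r Hr). Qed.

Lemma Lr_perm : perm_eq Lr (iota 0 n).
Proof.
apply: blocks_perm; apply/allP => k; rewrite mem_iota add0n => /andP[_ Hk].
have := w_le Hk; have [H1 _ _] := (dyckP n D).1 HD; rewrite /w => ?; lia.
Qed.

Lemma Lr_uniq : uniq Lr.
Proof. by rewrite (perm_uniq Lr_perm) iota_uniq. Qed.

Lemma Lr_size : size Lr = n.
Proof. by rewrite (perm_size Lr_perm) size_iota. Qed.

Lemma mem_Lr k : (k \in Lr) = (k < n).
Proof. by rewrite (perm_mem Lr_perm) mem_iota add0n. Qed.

Lemma Lr_sorted : sorted (lexlt (nth 0 w)) Lr.
Proof. apply: blocks_sorted; exact: iota_ltn_sorted. Qed.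

Lemma zeta_upx : upx (zeta D) = map (dP w) Lr.
Proof. by rewrite (zetaE HD) upx_Zw w_size. Qed.

Lemma dP_count s : dP w s = count (fun r => Pn w r s) Lr.
Proof. by rewrite /dP w_size; apply/esym/permP; exact: Lr_perm. Qed.

Lemma index_count s : s < n -> index s Lr = count (fun r => lexlt (nth 0 w) r s) Lr.
Proof.
move=> Hs; apply: (IL (@lexlt_trans _) (@lexlt_irr _)).
- exact: Lr_sorted.
- by rewrite mem_Lr.
Qed.

Lemma rank_prop r s : r < n -> s < n -> Pn w r s = (index r Lr < dP w s).
Proof.
move=> Hr Hs; rewrite index_count // dP_count; symmetry.
apply: (RL (@lexlt_irr (nth 0 w)) (@lexlt_total (nth 0 w))).
- move=> a b; exact: Pn_down.
- by rewrite mem_Lr.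
Qed.

Lemma nth_upx_rank s : s < n -> nth 0 (upx (zeta D)) (index s Lr) = dP w s.
Proof.
move=> Hs; rewrite zeta_upx (nth_map 0); last by rewrite index_mem mem_Lr.
by rewrite nth_index // mem_Lr.
Qed.

Lemma zeta_dyck : dyck n (zeta D).
Proof.
have [H1 H2 H3] := (dyckP n D).1 HD.
have Hsz : size (zeta D) = n + n by rewrite /zeta size_map size_sort size_mkseq.
have Hups : ups (zeta D) = n by rewrite -size_upx zeta_upx size_map Lr_size.
apply/dyckP; split => //.
apply: upx_pc.
  by have := size_ups_rights (zeta D); rewrite Hsz Hups; lia.
move=> t; rewrite Hups => Ht.
rewrite zeta_upx (nth_map 0) ?Lr_size //.
set s := nth 0 Lr t.
have Hs : s \in Lr by rewrite mem_nth ?Lr_size.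
have Hs' : s < n by rewrite -mem_Lr.
have <- : index s Lr = t by rewrite index_uniq ?Lr_size ?Lr_uniq.
rewrite index_count // dP_count; apply: sub_count => r /=; exact: Pn_lt.
Qed.

End DyckFacts.


Lemma card_ord_count n (p : pred nat) : #|[pred a : 'I_n | p a]| = count p (iota 0 n).
Proof. by rewrite cardE size_filter -enumT -val_enum_ord count_map. Qed.

Lemma count_lt_iota k n : count (fun i => i < k) (iota 0 n) = minn k n.
Proof.
elim: n => [|n IH]; first by rewrite minn0.
rewrite -addn1 iotaD count_cat IH /= add0n addn0; lia.
Qed.

Fixpoint mk (c : nat) (e : seq nat) (fin : nat) : seq bool :=
  match e with
  | [::] => nseq (fin - c) false
  | x :: e' => nseq (x - c) false ++ true :: mk x e' fin
  end.

Lemma upx_nseqf k : upx (nseq k false) = [::].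
Proof. by elim: k => //= k ->. Qed.
Lemma rights_nseqf k : rights (nseq k false) = k.
Proof. by rewrite /rights count_nseq /= mul1n. Qed.
Lemma ups_nseqf k : ups (nseq k false) = 0.
Proof. by rewrite /ups count_nseq /= mul0n. Qed.

Lemma upx_mk c e fin : path leq c e -> upx (mk c e fin) = map (subn^~ c) e.
Proof.
elim: e c => [|x e IH] c /=; first by rewrite upx_nseqf.
case/andP => Hcx He.
rewrite upx_cat upx_nseqf rights_nseqf /= IH //; congr (_ :: _).
  by rewrite addn0.
rewrite -map_comp; apply/eq_in_map => y Hy /=.
have : x <= y by move: He; rewrite (path_sortedE leq_trans) => /andP[/allP /(_ y Hy)].
lia.
Qed.

Lemma ups_mk c e fin : ups (mk c e fin) = size e.
Proof.
elim: e c => [|x e IH] c /=; first by rewrite ups_nseqf.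
by rewrite /ups count_cat -/(ups _) ups_nseqf /= -/(ups _) IH.
Qed.

Lemma rights_mk c e fin : path leq c e -> all (leq^~ fin) e -> c <= fin ->
  rights (mk c e fin) = fin - c.
Proof.
elim: e c => [|x e IH] c /=; first by rewrite rights_nseqf.
case/andP => Hcx He /andP[Hx Hall] Hc.
rewrite /rights count_cat -/(rights _) rights_nseqf /= -/(rights _) IH //.
lia.
Qed.

Section Usec.
Variables (n : nat) (U : rel 'I_n).
Hypothesis U_lt : forall a b : 'I_n, U a b -> a < b.
Hypothesis U_l : forall a a' b : 'I_n, a' <= a -> U a b -> U a' b.
Hypothesis U_r : forall a b b' : 'I_n, b <= b' -> U a b -> U a b'.

Definition dU (b : 'I_n) := #|[pred a | U a b]|.

Lemma U_dU (a b : 'I_n) : U a b = (a < dU b).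
Proof.
case: (boolP (U a b)) => H.
  have : #|[pred a' : 'I_n | a' < a.+1]| <= dU b.
    apply: subset_leq_card; apply/subsetP => x; rewrite !inE /= => Hx.
    exact: U_l H.
  rewrite (card_ord_count n (fun i => i < a.+1)) count_lt_iota.
  have := ltn_ord a; lia.
apply/esym/negbTE; rewrite -leqNgt.
have : dU b <= #|[pred a' : 'I_n | a' < a]|.
  apply: subset_leq_card; apply/subsetP => x; rewrite !inE /= => Hx.
  rewrite ltnNge; apply/negP => Hax; by rewrite (U_l Hax Hx) in H.
rewrite (card_ord_count n (fun i => i < a)) count_lt_iota; lia.
Qed.

Lemma dU_le (b : 'I_n) : dU b <= b.
Proof.
have : dU b <= #|[pred a' : 'I_n | a' < b]|.
  apply: subset_leq_card; apply/subsetP => x; rewrite !inE /= => Hx.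
  exact: U_lt.
rewrite (card_ord_count n (fun i => i < b)) count_lt_iota; lia.
Qed.

Lemma dU_mono (b b' : 'I_n) : b <= b' -> dU b <= dU b'.
Proof.
move=> Hb; apply: subset_leq_card; apply/subsetP => x; rewrite !inE /= => Hx.
exact: U_r Hx.
Qed.

Definition eU := map dU (enum 'I_n).

Lemma size_eU : size eU = n.
Proof. by rewrite size_map size_enum_ord. Qed.

Lemma nth_eU r (Hr : r < n) : nth 0 eU r = dU (Ordinal Hr).
Proof.
rewrite (nth_map (Ordinal Hr)) ?size_enum_ord //; congr dU.
by apply: val_inj; rewrite /= nth_enum_ord.
Qed.

Lemma eU_sorted : sorted leq eU.
Proof.
apply/(sortedP 0) => i; rewrite size_eU => Hi.
rewrite (nth_eU (ltnW Hi)) (nth_eU Hi); apply: dU_mono => /=; exact: leqnSn.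
Qed.

Definition EU := mk 0 eU n.

Lemma upx_EU : upx EU = eU.
Proof.
rewrite /EU upx_mk; last by rewrite path_min_sorted ?eU_sorted //; apply/allP.
by rewrite map_id_in // => x _; rewrite subn0.
Qed.

Lemma EU_dyck : dyck n EU.
Proof.
have Hall : all (leq^~ n) eU.
  apply/allP => x /mapP [b _ ->]; apply: (leq_trans (dU_le b)); exact: ltnW.
have Hp : path leq 0 eU by rewrite path_min_sorted ?eU_sorted //; apply/allP.
have Hu : ups EU = n by rewrite /EU ups_mk size_eU.
have Hr : rights EU = n by rewrite /EU rights_mk // subn0.
apply/dyckP; split => //.
  by rewrite size_ups_rights Hu Hr.
apply: upx_pc; first by rewrite Hu Hr.
move=> r; rewrite Hu => Hrn; rewrite upx_EU (nth_eU Hrn); exact: dU_le.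
Qed.

Lemma EU_area i j : in_area EU i j <->
  exists (i' j' : 'I_n), [/\ i = i'.+1, j = j'.+1, (i' < j')%N & ~~ U i' j'].
Proof.
rewrite in_areaE upx_EU /EU ups_mk size_eU; split.
- case/and4P => Hi Hij Hj Hx.
  have Hi' : i.-1 < n by lia.
  exists (Ordinal Hi'), (Ordinal Hj); split => /=; try lia.
  by rewrite U_dU /= -leqNgt -(nth_eU Hj).
- case=> i' [j' [-> -> Hij HU]] /=.
  rewrite ltnS Hij ltn_ord /=.
  have E : nth 0 eU j' = dU j' by rewrite (nth_eU (ltn_ord j')); congr dU; apply: val_inj.
  by rewrite E leqNgt -U_dU.
Qed.

Lemma EU_is_a : is_a U EU.
Proof. split; [exact: EU_dyck | exact: EU_area]. Qed.

End Usec.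


Definition hf (s : seq bool) := ~~ head false s.

Lemma Sb_cons H x t : Sb H (x :: t) =
  (if (x == H) || (x.+1 == H) then [:: x == H] else [::]) ++ Sb H t.
Proof. by rewrite /Sb /=; case: ifP. Qed.

Lemma firstS t : forall x H, x < H -> path stepr x t -> hf (Sb H (x :: t)).
Proof.
elim: t => [|y t IH] x H Hx Hp; rewrite Sb_cons.
  have -> : (x == H) = false by apply/eqP; lia.
  by case: (x.+1 == H).
have -> : (x == H) = false by apply/eqP; lia.
case: (x.+1 =P H) => E //=.
move: Hp => /= /andP[Hxy Hp]; apply: IH => //.
move: Hxy; rewrite /stepr => ?; lia.
Qed.

Lemma hf_flatten ss : all hf ss -> hf (flatten ss).
Proof. elim: ss => //= s ss IH /andP[Hs /IH]; by case: s Hs. Qed.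

Lemma split_eq (A A' X X' : seq bool) : A ++ X = A' ++ X' ->
  count negb A = count negb A' -> hf X -> hf X' -> A = A'.
Proof.
elim: A A' => [|a A IH] [|a' A'] //=.
- move=> -> /esym; case: a' => //= /eqP; by rewrite eqn0Ngt -has_count.
- move=> <- ; case: a => //= /eqP; by rewrite eqn0Ngt -has_count.
- case=> -> E /eqP; rewrite eqn_add2l => /eqP C HX HX'.
  by rewrite (IH _ E C HX HX').
Qed.

Lemma ups_Sb d w : ups (Sb d w) = count (fun x => x == d) w.
Proof. rewrite /ups /Sb count_map count_filter; apply: eq_count => x /=; lia. Qed.

Lemma cat_cancel (A X X' : seq bool) : A ++ X = A ++ X' -> X = X'.
Proof. by elim: A => //= a A IH [] /IH. Qed.

Lemma blocks_eq w w' :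
  (forall d, 0 < d -> hf (Sb d w)) -> (forall d, 0 < d -> hf (Sb d w')) ->
  forall k d, flatten [seq Sb d' w | d' <- iota d k] = flatten [seq Sb d' w' | d' <- iota d k] ->
  rights (Sb d w) = rights (Sb d w') ->
  forall d', d <= d' < d + k -> Sb d' w = Sb d' w'.
Proof.
move=> Hw Hw'; elim => [|k IH] d /= Heq Hr d' Hd'; first lia.
have Hhf : forall v, (forall d, 0 < d -> hf (Sb d v)) ->
    hf (flatten [seq Sb d'' v | d'' <- iota d.+1 k]).
  move=> v Hv; apply: hf_flatten; apply/allP => s /mapP [d'' Hd'' ->].
  by apply: Hv; move: Hd''; rewrite mem_iota; lia.
have E1 := split_eq Heq Hr (Hhf _ Hw) (Hhf _ Hw').
case: (d' =P d) => [-> //|Hne].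
rewrite E1 in Heq; have Heq2 := cat_cancel Heq.
apply: (IH d.+1) => //; last by lia.
by rewrite !rights_Sb; have := ups_Sb d w; rewrite E1 ups_Sb => Hu;
   rewrite (eq_count (a2 := fun x => x == d)) ?Hu; [apply: eq_count => x /=; lia | move=> x /=; lia].
Qed.

Lemma FD t : forall t', sorted stepr t -> sorted stepr t' ->
  (forall H, Sb H t = Sb H t') -> t = t'.
Proof.
elim: t => [|x t IH] [|x' t'] // Hs Hs' HS.
- by have := HS x'; rewrite Sb_cons eqxx.
- by have := HS x; rewrite Sb_cons eqxx.
case: (ltngtP x x') => Hxx.
- have := firstS Hxx Hs; rewrite HS Sb_cons eqxx /=; by [].
- have := firstS Hxx Hs'; rewrite -HS Sb_cons eqxx /=; by [].
- rewrite Hxx in Hs HS *; congr (_ :: _); apply: IH.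
  + exact: path_sorted Hs.
  + exact: path_sorted Hs'.
  + move=> H; have := HS H; rewrite !Sb_cons; case: ifP => _ //=; by case.
Qed.

Lemma W_inj n D1 D2 : dyck n D1 -> dyck n D2 -> W D1 = W D2 -> D1 = D2.
Proof.
move=> H1 H2 EW.
have [S1 U1 P1] := (dyckP n D1).1 H1.
have [S2 U2 P2] := (dyckP n D2).1 H2.
have R1 : rights D1 = n by have := size_ups_rights D1; lia.
have R2 : rights D2 = n by have := size_ups_rights D2; lia.
apply: upx_inj; first by rewrite R1 R2.
apply: (@eq_from_nth _ 0); first by rewrite !size_upx U1 U2.
move=> r; rewrite size_upx U1 => Hr.
have X1 := pc_upx P1 (r := r); have X2 := pc_upx P2 (r := r).
have := nth_W (P := D1) (r := r); have := nth_W (P := D2) (r := r).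
rewrite U1 U2 EW in X1 X2 * => /(_ Hr) -> /(_ Hr).
move: (X1 Hr) (X2 Hr); lia.
Qed.

Lemma hf_W n D : dyck n D -> forall d, 0 < d -> hf (Sb d (W D)).
Proof.
move=> HD d Hd; have [_ Hs H0 _] := W_props HD.
case E: (W D) Hs H0 => [|x t] //= Hs H0.
apply: firstS => //; lia.
Qed.

Lemma Sb_nil d w : all (fun x => x.+1 < d) w -> Sb d w = [::].
Proof.
move=> /allP H; rewrite /Sb; have -> : [seq x <- w | (x == d) || (x.+1 == d)] = [::] ; last by [].
apply/eqP; rewrite -size_eq0 size_filter -leqn0 leqNgt -has_count; apply/hasPn => x /H; lia.
Qed.

Lemma zeta_inj n D1 D2 : dyck n D1 -> dyck n D2 -> zeta D1 = zeta D2 -> D1 = D2.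
Proof.
move=> H1 H2; rewrite (zetaE H1) (zetaE H2).
have [S1 _ _] := (dyckP n D1).1 H1.
have [S2 _ _] := (dyckP n D2).1 H2.
rewrite S1 S2 /Zw => EZ.
apply: (W_inj H1 H2); apply: FD.
- by case: (W_props H1).
- by case: (W_props H2).
have Hall : forall D, dyck n D -> all (fun x => x.+1 < (n + n).+1) (W D).
  move=> D HD; apply/allP => x Hx; have [Hsz _ _ Hle] := W_props HD.
  have := Hx; rewrite -(nth_index 0 Hx) => _.
  have Hi : index x (W D) < n by rewrite -Hsz index_mem.
  have := Hle _ Hi; rewrite nth_index //; lia.
move=> H; case: (ltnP H (n + n).+1) => HH.
  apply: (blocks_eq (hf_W H1) (hf_W H2) EZ) => //; try lia.
  by rewrite !rights_Sb !(@eq_count _ (fun x => x.+1 == 0) pred0) // !count_pred0.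
rewrite !Sb_nil //.
- apply/allP => x Hx; have := (allP (Hall _ H2)) x Hx; lia.
- apply/allP => x Hx; have := (allP (Hall _ H1)) x Hx; lia.
Qed.


Definition Dy n := map val (enum [pred t : (n + n).-tuple bool | dyck n (val t)]).

Lemma mem_Dy n D : (D \in Dy n) = dyck n D.
Proof.
apply/idP/idP.
  by case/mapP => t; rewrite mem_enum inE => H ->.
move=> HD; have [Hs _ _] := (dyckP n D).1 HD.
have Hs' : size D == n + n by apply/eqP.
have -> : D = val (Tuple Hs') by [].
by apply: map_f; rewrite mem_enum inE.
Qed.

Lemma uniq_Dy n : uniq (Dy n).
Proof. by rewrite map_inj_uniq ?enum_uniq //; exact: val_inj. Qed.

Lemma zeta_surj n E : dyck n E -> exists D, dyck n D /\ zeta D = E.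
Proof.
move=> HE.
have Hu : uniq (map zeta (Dy n)).
  rewrite map_inj_in_uniq ?uniq_Dy // => D1 D2; rewrite !mem_Dy; exact: zeta_inj.
have Hsub : {subset map zeta (Dy n) <= Dy n}.
  by move=> x /mapP [D]; rewrite mem_Dy => HD ->; rewrite mem_Dy; exact: zeta_dyck.
have [_ Heq] := uniq_min_size Hu Hsub (eq_leq (esym (size_map _ _))).
have : E \in map zeta (Dy n) by rewrite Heq mem_Dy.
by case/mapP => D; rewrite mem_Dy => HD ->; exists D.
Qed.

Section Main.
Variables (n : nat) (U : rel 'I_n).
Hypothesis U_lt : forall a b : 'I_n, U a b -> a < b.
Hypothesis U_l : forall a a' b : 'I_n, a' <= a -> U a b -> U a' b.
Hypothesis U_r : forall a b b' : 'I_n, b <= b' -> U a b -> U a b'.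

Lemma exists_p : exists D, is_p U D.
Proof.
have [D [HD HzD]] := zeta_surj (EU_dyck U_lt U_r).
exists D; split => //.
have Hidx : forall i : 'I_n, index (nat_of_ord i) (Lr n D) < n.
  move=> i; have H := index_mem (nat_of_ord i) (Lr n D).
  by rewrite (mem_Lr HD) ltn_ord (Lr_size HD) in H.
pose f := fun i : 'I_n => Ordinal (Hidx i).
have finj : injective f.
  move=> i j /(congr1 val) /= E; apply: val_inj => /=.
  have Hi : nat_of_ord i \in Lr n D by rewrite (mem_Lr HD).
  have Hj : nat_of_ord j \in Lr n D by rewrite (mem_Lr HD).
  by rewrite -(nth_index 0 Hi) E (nth_index 0 Hj).
exists f; split; first exact: injF_bij.
move=> i j; rewrite (area_seqE HD).
have -> : @Pw n (W D) i j = Pn (W D) i j by [].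
rewrite (rank_prop HD (ltn_ord i) (ltn_ord j)) (U_dU U_l) /=.
congr (_ < _).
rewrite -(nth_upx_rank HD (ltn_ord j)) HzD (upx_EU U_r).
by rewrite (nth_eU U (Hidx j)).
Qed.

Lemma forall_p D : is_p U D -> is_a U (zeta D).
Proof.
case=> HD [f [fbij Hf]].
suff -> : zeta D = EU U by exact: EU_is_a.
have HzD := zeta_dyck HD; have HE := EU_dyck U_lt U_r.
have [S1 U1 _] := (dyckP n _).1 HzD.
have [S2 U2 _] := (dyckP n _).1 HE.
apply: upx_inj.
  have := size_ups_rights (zeta D); have := size_ups_rights (EU U); lia.
apply: (sorted_eq leq_trans anti_leq (upx_sorted _)).
  by rewrite (upx_EU U_r); exact: eU_sorted.
rewrite (zeta_upx HD) (upx_EU U_r) /eU.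
apply: (perm_trans (perm_map _ (Lr_perm HD))).
have -> : map (dP (W D)) (iota 0 n) = map (dU U \o f) (enum 'I_n).
  rewrite -val_enum_ord -map_comp; apply/eq_map => r /=.
  rewrite /dP (w_size HD) -card_ord_count.
  transitivity #|[pred r' : 'I_n | U (f r') (f r)]|.
    by apply: eq_card => r'; rewrite !inE /= -Hf (area_seqE HD).
  rewrite /dU; transitivity #|[set a | U a (f r)]|; last by apply: eq_card => a; rewrite !inE.
  rewrite -(card_preimset [set a | U a (f r)] (bij_inj fbij)).
  by apply: eq_card => r'; rewrite !inE.
rewrite map_comp; apply: perm_map.
apply: uniq_perm.
- by rewrite map_inj_uniq ?enum_uniq //; exact: bij_inj.
- exact: enum_uniq.
- move=> x; rewrite mem_enum; case: fbij => g fg gf.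
  by rewrite -[x]gf; apply: map_f; rewrite mem_enum.
Qed.

End Main.

Unset Implicit Arguments.

Theorem mainTheorem1 (n : nat) (U : rel 'I_n) :
  (0 < n)%N -> is_UIO U ->
  (exists D, is_p U D) /\ (forall D, is_p U D -> is_a U (zeta D)).
Proof.
move=> _ [x [Hx1 Hx2]].
have xle : forall a b : 'I_n, a <= b -> Rle (x a) (x b).
  move=> a b; rewrite leq_eqVlt => /orP [/eqP E|H].
    have -> : a = b by apply: val_inj.
    exact: Rle_refl.
  by apply: Rlt_le; apply: Hx1.
have U_lt : forall a b : 'I_n, U a b -> a < b.
  move=> a b /Hx2 H; rewrite ltnNge; apply/negP => Hba; have := xle _ _ Hba; lra.
have U_l : forall a a' b : 'I_n, a' <= a -> U a b -> U a' b.
  move=> a a' b Ha /Hx2 H; apply/Hx2; have := xle _ _ Ha; lra.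
have U_r : forall a b b' : 'I_n, b <= b' -> U a b -> U a b'.
  move=> a b b' Hb /Hx2 H; apply/Hx2; have := xle _ _ Hb; lra.
split; [exact: exists_p | exact: forall_p].
Qed.
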